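(* Let $K$ be a linearly ordered set and let $\{(\mathcal{A}_{k,\ell},\mathcal{A}_{k,r})\}_{k\in K}$ be pairs of subalgebras of a non-commutative space $(\mathcal{A},\varphi)$ which are bi-monotonically independent with respect to $\varphi$. Let $n\ge1$, $\chi:\{1,\dots,n\}\to\{\ell,r\}$, $\omega:\{1,\dots,n\}\to K$, and $a_1,\dots,a_n\in\mathcal{A}$ with $a_j\in\mathcal{A}_{\omega(j),\chi(j)}$. Let $V_1,\dots,V_m$ be the blocks of $\pi_{\chi,\omega}$ listed in the order for which $\max_{\prec_\chi}V_i\prec_\chi\min_{\prec_\chi}V_{i+1}$. If $k\in\{1,\dots,m\}$ satisfies $\omega(V_{k-1})<\omega(V_k)>\omega(V_{k+1})$ (where the first inequality is omitted if $k=1$ and the second if $k=m$), then \[\varphi(a_1\cdots a_n)=\varphi(a_{V_k})\,\varphi(a_W),\qquad W=\{1,\dots,n\}\setminus V_k.\]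
   Context: A non-commutative space $(\mathcal{A},\varphi)$ is a complex algebra with a linear functional, with $\varphi(1)=1$ if $\mathcal{A}$ is unital. For algebras $\mathcal{C}_k$, $\sqcup_k\mathcal{C}_k$ denotes the free product without identification of units, $*_k\mathcal{C}_k$ the free product of unital algebras with identification of units, and $\widetilde{\mathcal{C}}=\mathbb{C}1\oplus\mathcal{C}$ the unitization; $\widetilde{\mathcal{C}_1}*\widetilde{\mathcal{C}_2}\cong\widetilde{\mathcal{C}_1\sqcup\mathcal{C}_2}$. Notation. For $n\ge1$ and $\chi:\{1,\dots,n\}\to\{\ell,r\}$ with $\chi^{-1}(\{\ell\})=\{i_1<\dots<i_p\}$ and $\chi^{-1}(\{r\})=\{i_{p+1}>\dots>i_n\}$, let $\prec_\chi$ be the total order $i_1\prec_\chi\cdots\prec_\chi i_n$. A $\chi$-interval is an interval for $\prec_\chi$. For $V=\{v_1<\dots<v_s\}$ write $a_V=a_{v_1}\cdots a_{v_s}$; a functional applied to the empty product equals $1$. For $\omega:\{1,\dots,n\}\to K$, $\pi_{\chi,\omega}$ is the unique partition of $\{1,\dots,n\}$ into blocks $V_1,\dots,V_m$ such that each $V_k$ is a $\chi$-interval, $\max_{\prec_\chi}V_k\prec_\chi\min_{\prec_\chi}V_{k+1}$, $\omega$ is constant on each $V_k$, and $\omega(V_k)\ne\omega(V_{k+1})$. c-bi-free product. Given pairs of unital algebras $(\mathcal{B}_{k,\ell},\mathcal{B}_{k,r})_{k\in K}$ and unital linear functionals $\varphi_k,\psi_k$ on $\mathcal{B}_{k,\ell}*\mathcal{B}_{k,r}$,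 their c-bi-free product $(\varphi,\psi)$ is the unique pair of unital linear functionals on $*_k(\mathcal{B}_{k,\ell}*\mathcal{B}_{k,r})$ restricting to $\varphi_k,\psi_k$ and such that whenever $b_j\in\mathcal{B}_{\omega(j),\chi(j)}$ with $\psi(b_V)=0$ for all $V\in\pi_{\chi,\omega}$, then $\psi(b_1\cdots b_n)=0$ and $\varphi(b_1\cdots b_n)=\prod_{V\in\pi_{\chi,\omega}}\varphi(b_V)$. Bi-monotonic product. For pairs $(\mathcal{A}_{k,\ell},\mathcal{A}_{k,r})$, $k=1,2$, with linear functionals $\varphi_k$ on $\mathcal{A}_{k,\ell}\sqcup\mathcal{A}_{k,r}$: let $\widetilde{\varphi_k}$ be the unital extension to $\widetilde{\mathcal{A}_{k,\ell}\sqcup\mathcal{A}_{k,r}}$, $\delta_1$ the unital functional on $\widetilde{\mathcal{A}_{1,\ell}\sqcup\mathcal{A}_{1,r}}$ vanishing on $\mathcal{A}_{1,\ell}\sqcup\mathcal{A}_{1,r}$, and $(\widetilde\varphi,\widetilde\psi)$ the c-bi-free product of $(\widetilde{\varphi_1},\delta_1)$ and $(\widetilde{\varphi_2},\widetilde{\varphi_2})$ for the pairs $(\widetilde{\mathcal{A}_{k,\ell}},\widetilde{\mathcal{A}_{k,r}})$. Then $\varphi_1\rhd\!\!\rhd\varphi_2$ is the restriction of $\widetilde\varphi$ to $(\mathcal{A}_{1,\ell}\sqcup\mathcal{A}_{1,r})\sqcup(\mathcal{A}_{2,\ell}\sqcup\mathcal{A}_{2,r})$, regarded as a functional for the pair $(\mathcal{A}_{1,\ell}\sqcup\mathcal{A}_{2,\ell},\mathcal{A}_{1,r}\sqcup\mathcal{A}_{2,r})$.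 This product is associative, so iterated products $\varphi_{k_1}\rhd\!\!\rhd\cdots\rhd\!\!\rhd\varphi_{k_p}$ are well defined. Bi-monotonic independence. A family $\{(\mathcal{A}_{k,\ell},\mathcal{A}_{k,r})\}_{k\in K}$ of pairs of subalgebras of $(\mathcal{A},\varphi)$, $K$ linearly ordered, is bi-monotonically independent if for every finite $k_1<\dots<k_p$ in $K$, $\varphi\circ\iota=\varphi_{k_1}\rhd\!\!\rhd\cdots\rhd\!\!\rhd\varphi_{k_p}$, where $\iota:\sqcup_{j}(\mathcal{A}_{k_j,\ell}\sqcup\mathcal{A}_{k_j,r})\to\mathcal{A}$ is induced by the inclusions and $\varphi_k=\varphi\circ\iota|_{\mathcal{A}_{k,\ell}\sqcup\mathcal{A}_{k,r}}$. *)

(* Defs.v *)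
From HB Require Import structures.
From mathcomp Require Import all_boot all_order all_algebra.
Set Implicit Arguments. Unset Strict Implicit. Unset Printing Implicit Defensive.
Import Order.TTheory GRing.Theory.

(* Conventions: positions are 0,...,n-1 (the paper's 1,...,n shifted);
   sides are booleans: true = left (l), false = right (r). *)

(* The positions 0..n-1 listed in the order <_chi : left positions increasing,
   then right positions decreasing. *)
Definition chi_order (n : nat) (chi : nat -> bool) : seq nat :=
  [seq i <- iota 0 n | chi i] ++ rev [seq i <- iota 0 n | ~~ chi i].

Fixpoint group_runs (T : eqType) (f : nat -> T) (s : seq nat) : seq (seq nat) :=
  match s with
  | [::] => [::]
  | x :: s' =>
      match group_runs f s' with
      | [::] => [:: [:: x]]
      | b :: bs => if f x == f (head x b) then (x :: b) :: bs
                   else [:: x] :: b :: bs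
      end
  end.

(* The blocks V_1, ..., V_m of pi_{chi,omega}, listed so that
   max V_i <_chi min V_{i+1}; each block is listed in <_chi order. *)
Definition pi_blocks (T : eqType) (n : nat) (chi : nat -> bool) (om : nat -> T)
  : seq (seq nat) := group_runs om (chi_order n chi).

Section Alg.
Variables (R : fieldType) (A : lmodType R).

Definition nc_algebra (mul : A -> A -> A) : Prop :=
  [/\ associative mul, left_distributive mul +%R, right_distributive mul +%R,
      (forall (c : R) x y, mul (c *: x)%R y = (c *: mul x y)%R)
    & (forall (c : R) x y, mul x (c *: y)%R = (c *: mul x y)%R)].

Definition lin_functional (phi : A -> R) : Prop :=
  forall (c : R) x y, phi (c *: x + y)%R = (c * phi x + phi y)%R.

Definition subalgebra (mul : A -> A -> A) (S : pred A) : Prop :=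
  [/\ S 0%R, (forall x y, S x -> S y -> S (x + y)%R),
      (forall (c : R) x, S x -> S (c *: x)%R)
    & (forall x y, S x -> S y -> S (mul x y))].
End Alg.

Section Words.
Variables (R : fieldType) (A : lmodType R) (K : eqType).
Variable (mul : A -> A -> A).
Variable (Asub : K -> bool -> pred A).

(* A letter (k, s, a) stands for an element a of the atomic algebra A_{k,s};
   a word is a formal (free) product of letters; the empty word is the unit. *)
Definition letter := (K * bool * A)%type.
Definition wfun := seq letter -> R.

Definition validl (G : pred K) (l : letter) : bool :=
  G l.1.1 && Asub l.1.1 l.1.2 l.2.
Definition validw (G : pred K) (w : seq letter) : bool := all (validl G) w.

(* F (restricted to words in the atoms A_{k,s}, k in G) is a linear functional
   on the unitization of the free product (without identification of units)
   of the A_{k,s}, k in G, s in {l,r}: it is multilinear in the letters and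
   compatible with the product inside each atomic algebra. Its value on the
   unit is F [::]. *)
Definition valid_on (G : pred K) (F : wfun) : Prop :=
  [/\ (forall u v k s x y, validw G (u ++ v) -> G k -> Asub k s x -> Asub k s y ->
        F (u ++ (k, s, (x + y)%R) :: v) = (F (u ++ (k, s, x) :: v) + F (u ++ (k, s, y) :: v))%R),
      (forall u v k s (c : R) x, validw G (u ++ v) -> G k -> Asub k s x ->
        F (u ++ (k, s, (c *: x)%R) :: v) = (c * F (u ++ (k, s, x) :: v))%R)
    & (forall u v k s x y, validw G (u ++ v) -> G k -> Asub k s x -> Asub k s y ->
        F (u ++ (k, s, x) :: (k, s, y) :: v) = F (u ++ (k, s, mul x y) :: v))].

(* General elements of the (unitized) free product: formal linear
   combinations of words. *)
Definition elem := seq (R * seq letter).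
Definition extF (F : wfun) (x : elem) : R := (\sum_(cw <- x) cw.1 * F cw.2)%R.
Definition mulE (x y : elem) : elem :=
  [seq ((cw.1 * dv.1)%R, cw.2 ++ dv.2) | cw <- x, dv <- y].
Definition prodE (xs : seq elem) : elem := foldr mulE [:: (1%R, [::])] xs.
(* x lies in B_{G,s} = unitization of the free product of the A_{k,s}, k in G *)
Definition inB (G : pred K) (s : bool) (x : elem) : bool :=
  all (fun cw => all (fun l => validl G l && (l.1.2 == s)) cw.2) x.
Definition bprod (b : nat -> elem) (V : seq nat) : elem := prodE (map b (sort leq V)).

Definition uext (F : wfun) : wfun := fun w => if w is [::] then 1%R else F w.
Definition delta : wfun := fun w => if w is [::] then 1%R else 0%R.

(* The c-bi-freeness condition for two pairs: pair "true" has atoms with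
   K-index in G1, pair "false" has atoms with K-index in G2. *)
Definition is_cbifree (G1 G2 : pred K) (Phi Psi : wfun) : Prop :=
  forall (n : nat) (chi om : nat -> bool) (b : nat -> elem),
    0 < n ->
    (forall j, j < n -> inB (if om j then G1 else G2) (chi j) (b j)) ->
    (forall V, V \in pi_blocks n chi om -> extF Psi (bprod b V) = 0%R) ->
    extF Psi (bprod b (iota 0 n)) = 0%R /\
    extF Phi (bprod b (iota 0 n)) =
      (\prod_(V <- pi_blocks n chi om) extF Phi (bprod b V))%R.

Definition cbifree_product (G1 G2 : pred K) (phi1 psi1 phi2 psi2 Phi Psi : wfun)
  : Prop :=
  [/\ valid_on (predU G1 G2) Phi, valid_on (predU G1 G2) Psi,
      (forall w, validw G1 w -> Phi w = phi1 w /\ Psi w = psi1 w),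
      (forall w, validw G2 w -> Phi w = phi2 w /\ Psi w = psi2 w)
    & is_cbifree G1 G2 Phi Psi].

Definition bm_product (G1 G2 : pred K) (F1 F2 F12 : wfun) : Prop :=
  exists Phi Psi : wfun,
    cbifree_product G1 G2 (uext F1) delta (uext F2) (uext F2) Phi Psi /\
    (forall w, validw (predU G1 G2) w -> 0 < size w -> F12 w = Phi w).

Definition phiA (phi : A -> R) : wfun := fun w =>
  if w is l :: w' then phi (foldl mul l.2 (map (fun l' : letter => l'.2) w')) else 1%R.

Fixpoint bm_chain (phi : A -> R) (G : pred K) (F : wfun) (ks : seq K) : Prop :=
  match ks with
  | [::] => forall w, validw G w -> 0 < size w -> F w = phiA phi w
  | k :: ks' => exists F' : wfun,
      bm_product G (pred1 k) F (phiA phi) F' /\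
      bm_chain phi (predU G (pred1 k)) F' ks'
  end.
End Words.

Definition bm_indep (R : fieldType) (A : lmodType R) (d : Order.disp_t)
  (K : orderType d) (mul : A -> A -> A) (phi : A -> R)
  (Asub : K -> bool -> pred A) : Prop :=
  forall (k1 : K) (ks : seq K), sorted (fun x y => (x < y)%O) (k1 :: ks) ->
    bm_chain mul Asub phi (pred1 k1) (phiA mul phi) ks.

Definition phiS (R : fieldType) (A : lmodType R) (mul : A -> A -> A)
  (phi : A -> R) (a : nat -> A) (S : seq nat) : R :=
  if sort leq S is x :: s then phi (foldl mul (a x) (map a s)) else 1%R.

(* Main.v *)
Require Import Defs.
From HB Require Import structures.
From mathcomp Require Import all_boot all_order all_algebra.
From mathcomp Require Import ring.
Set Implicit Arguments. Unset Strict Implicit. Unset Printing Implicit Defensive.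
Import Order.TTheory GRing.Theory.


Section ElemAlg.
Variables (R : fieldType) (A : lmodType R) (K : eqType).
Local Notation elemT := (elem A K).
Local Notation wf := (wfun A K).
Local Open Scope ring_scope.

Definition unitE : elemT := [:: (1, [::])].
Definition shE (x : elemT) (t : R) : elemT := x ++ [:: (t, [::])].

Lemma extF_cat (F : wf) x y : extF F (x ++ y) = extF F x + extF F y.
Proof. by rewrite /extF big_cat. Qed.

Lemma extF_mulE (F : wf) X Y :
  extF F (mulE X Y) = \sum_(cw <- X) cw.1 * extF (fun v => F (cw.2 ++ v)) Y.
Proof.
rewrite /extF /mulE big_allpairs_dep; apply: eq_bigr => cw _.
rewrite big_distrr; apply: eq_bigr => dv _ /=; by rewrite mulrA.
Qed.

Lemma extF_unit (F : wf) : extF F unitE = F [::].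
Proof. by rewrite /extF big_cons big_nil addr0 mul1r. Qed.

Lemma extF_prodE_add (xs1 xs2 : seq elemT) x y : forall F : wf,
  extF F (prodE (xs1 ++ (x ++ y) :: xs2)) =
  extF F (prodE (xs1 ++ x :: xs2)) + extF F (prodE (xs1 ++ y :: xs2)).
Proof.
elim: xs1 => [|z xs1 IH] F /=.
  by rewrite !extF_mulE big_cat.
rewrite !extF_mulE -big_split /=; apply: eq_bigr => cw _.
by rewrite IH mulrDr.
Qed.

Lemma extF_prodE_scal (xs1 xs2 : seq elemT) t : forall F : wf,
  extF F (prodE (xs1 ++ [:: (t, [::])] :: xs2)) = t * extF F (prodE (xs1 ++ xs2)).
Proof.
elim: xs1 => [|z xs1 IH] F /=.
  by rewrite extF_mulE big_cons big_nil addr0.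
rewrite !extF_mulE big_distrr /=; apply: eq_bigr => cw _.
by rewrite IH mulrCA.
Qed.

Lemma extF_prodE_sh (xs1 xs2 : seq elemT) x t (F : wf) :
  extF F (prodE (xs1 ++ shE x t :: xs2)) =
  extF F (prodE (xs1 ++ x :: xs2)) + t * extF F (prodE (xs1 ++ xs2)).
Proof. by rewrite /shE extF_prodE_add extF_prodE_scal. Qed.

Definition bset (bb : nat -> elemT) j (x : elemT) : nat -> elemT :=
  fun i => if i == j then x else bb i.

Lemma map_bset_notin bb j x L : j \notin L -> map (bset bb j x) L = map bb L.
Proof.
move=> hj; apply/eq_in_map => i hi; rewrite /bset.
by case: eqP => // eij; rewrite -eij hi in hj.
Qed.

Lemma extF_map_sh bb j t L (F : wf) : uniq L -> j \in L ->
  extF F (prodE (map (bset bb j (shE (bb j) t)) L)) =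
  extF F (prodE (map bb L)) + t * extF F (prodE (map bb [seq i <- L | i != j])).
Proof.
move=> uL hj; case/splitPr: hj uL => L1 L2 uL.
have : j \notin L1 /\ j \notin L2.
  move: uL; rewrite cat_uniq /= => /and4P [_ h1 h2 _]; split => //.
  by move: h1; rewrite negb_or => /andP [].
case=> h1 h2.
rewrite !map_cat /= !map_bset_notin // /bset eqxx extF_prodE_sh.
rewrite filter_cat /= eqxx /= !(@eq_in_filter _ _ predT) ?filter_predT ?map_cat //.
  by move=> i hi /=; apply/eqP => eij; rewrite -eij hi in h2.
by move=> i hi /=; apply/eqP => eij; rewrite -eij hi in h1.
Qed.

Lemma extF_map_unit bb j L (F : wf) : uniq L -> j \in L ->
  extF F (prodE (map (bset bb j unitE) L)) =
  extF F (prodE (map bb [seq i <- L | i != j])).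
Proof.
move=> uL hj; case/splitPr: hj uL => L1 L2 uL.
have : j \notin L1 /\ j \notin L2.
  move: uL; rewrite cat_uniq /= => /and4P [_ h1 h2 _]; split => //.
  by move: h1; rewrite negb_or => /andP [].
case=> h1 h2.
rewrite !map_cat /= !map_bset_notin // /bset eqxx extF_prodE_scal mul1r.
rewrite filter_cat /= eqxx /= !(@eq_in_filter _ _ predT) ?filter_predT ?map_cat //.
  by move=> i hi /=; apply/eqP => eij; rewrite -eij hi in h2.
by move=> i hi /=; apply/eqP => eij; rewrite -eij hi in h1.
Qed.

Lemma prodE_letters (ls : seq (letter A K)) :
  prodE (map (fun l => [:: (1, [:: l])]) ls) = [:: (1, ls)].
Proof.
elim: ls => [|l ls IH] //=.
by rewrite IH /mulE /= mulr1.
Qed.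

End ElemAlg.


Section Runs.
Variables (T : eqType) (f : nat -> T).

Lemma gr_flatten s : flatten (group_runs f s) = s.
Proof.
elim: s => [|x s IH] //=.
case E: (group_runs f s) IH => [|b bs] /=; first by move=> <-.
by case: ifP => _ /= <-.
Qed.

Lemma gr_cons x s : exists b bs, group_runs f (x :: s) = (x :: b) :: bs.
Proof.
rewrite /=; case: (group_runs f s) => [|b bs]; first by exists [::], [::].
by case: ifP => _; [exists b, bs | exists [::], (b :: bs)].
Qed.

Lemma gr_blocks s B : B \in group_runs f s ->
  B != [::] /\ all (fun y => f y == f (head 0 B)) B.
Proof.
elim: s B => [|x s IH] B //=.
case E: (group_runs f s) IH => [|b bs] IH.
  by rewrite inE => /eqP -> /=; rewrite eqxx.
case: ifP => hx; rewrite !inE => /orP [/eqP ->|hB].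
- have [hb1 hb2] := IH b (mem_head _ _).
  case: b hb1 hb2 hx {E IH} => // y b _ /= /andP [hy hb] /eqP hx.
  by rewrite eqxx /= hx hy.
- by apply: IH; rewrite inE hB orbT.
- by rewrite /= eqxx.
- by apply: IH.
Qed.

Lemma gr_adj s : sorted (fun B B' => f (head 0 B) != f (head 0 B')) (group_runs f s).
Proof.
elim: s => [|x s IH] //=.
case E: (group_runs f s) IH => [|b bs] IH //.
have hb : b != [::] by have [] := @gr_blocks s b; rewrite ?E ?mem_head.
case: b hb E IH => // y b _ E IH.
case: ifP => hx /=.
  by move: IH; case: bs {E} => //= B bs; rewrite (eqP hx).
by rewrite /= hx; exact: IH.
Qed.

Lemma grE x s : group_runs f (x :: s) =
  if group_runs f s is b :: bs then
    (if f x == f (head x b) then (x :: b) :: bs else [:: x] :: b :: bs)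
  else [:: [:: x]].
Proof. by []. Qed.

Lemma gr_const x s : all (fun y => f y == f x) s -> group_runs f (x :: s) = [:: x :: s].
Proof.
elim: s x => [|y s IH] x; first by [].
move=> /andP [hy hs].
rewrite grE (IH y); last first.
  apply/allP => z hz; rewrite (eqP (allP hs z hz)) (eqP hy) //.
by rewrite /= (eqP hy) eqxx.
Qed.

Lemma gr_cat s1 s2 : s1 != [::] -> s2 != [::] ->
  f (last 0 s1) != f (head 0 s2) ->
  group_runs f (s1 ++ s2) = group_runs f s1 ++ group_runs f s2.
Proof.
elim: s1 => [|x s1 IH] // _ h2.
case: s1 IH => [|y s1] IH.
  clear IH; case: s2 h2 => // z s2 _ hxz; rewrite /= in hxz.
  have [b [bs E]] := gr_cons z s2.
  by rewrite cat1s (grE x (z :: s2)) E /= (negbTE hxz).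
move=> hl; rewrite cat_cons grE IH //.
have [b [bs E]] := gr_cons y s1.
by rewrite E (grE x (y :: s1)) E /=; case: ifP.
Qed.

Lemma seg_in_gr s s1 U s2 c :
  s = s1 ++ U ++ s2 -> U != [::] -> all (fun y => f y == c) U ->
  ((s1 == [::]) || (f (last 0 s1) != c)) ->
  ((s2 == [::]) || (f (head 0 s2) != c)) ->
  U \in group_runs f s.
Proof.
move=> -> hU hc h1 h2.
case: U hU hc => // x U _ hall.
have hall' : all (fun y => f y == f x) U.
  apply/allP => z hz; rewrite (eqP (allP hall z _)) ?(eqP (allP hall x _)) ?mem_head //.
  by rewrite inE hz orbT.
have hlast : f (last x U) = c by apply/eqP; apply: (allP hall); exact: mem_last.
have hfx : f x = c by apply/eqP; apply: (allP hall); exact: mem_head.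
have gU : group_runs f (x :: U) = [:: x :: U] by apply: gr_const.
have gU2 : x :: U \in group_runs f ((x :: U) ++ s2).
  case: s2 h2 => [|z s2] h2; first by rewrite cats0 gU mem_head.
  rewrite gr_cat // ?gU ?mem_head //=.
  by move: h2 => /=; rewrite hlast eq_sym.
case: s1 h1 => [|y s1] h1; first exact: gU2.
rewrite gr_cat // ?mem_cat ?gU2 ?orbT //.
by move: h1 => /=; rewrite hfx.
Qed.

Lemma gr_map (p : nat -> nat) s :
  group_runs f (map p s) = map (map p) (group_runs (f \o p) s).
Proof.
elim: s => [|x s IH] //=.
rewrite IH; case: (group_runs (f \o p) s) => [|b bs] //=.
case: b => [|y b] /=; last by case: ifP.
by case: ifP.
Qed.

End Runs.

Definition nbrQ (Q : pred nat) (s1 s2 : seq nat) : bool :=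
  ((s1 == [::]) || Q (last 0 s1)) && ((s2 == [::]) || Q (head 0 s2)).

Lemma nbr_filter (Q p : pred nat) s1 s2 : (forall x, Q x -> p x) ->
  nbrQ Q s1 s2 -> nbrQ Q (filter p s1) (filter p s2).
Proof.
move=> hQp /andP [h1 h2]; apply/andP; split.
  case/lastP: s1 h1 => [|s1 y] //; rewrite last_rcons => /orP [/eqP e|hy]; first by case: s1 e.
  by rewrite filter_rcons (hQp _ hy) last_rcons hy orbT.
case: s2 h2 => [|y s2] //= hy.
by rewrite (hQp _ hy) /= hy.
Qed.

Definition chiord (chi : nat -> bool) (P : seq nat) : seq nat :=
  [seq i <- P | chi i] ++ rev [seq i <- P | ~~ chi i].

Lemma chiord_filter chi (p : pred nat) P :
  chiord chi (filter p P) = filter p (chiord chi P).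
Proof.
rewrite /chiord filter_cat filter_rev -!filter_predI.
by congr (_ ++ rev _); apply: eq_filter => x /=; rewrite andbC.
Qed.

Lemma perm_chiord chi P : perm_eq (chiord chi P) P.
Proof.
rewrite /chiord perm_sym -(perm_filterC chi P) perm_cat2l perm_sym perm_rev.
exact: perm_refl.
Qed.

Lemma chiord_map (p : nat -> nat) chi s :
  map p (chiord (chi \o p) s) = chiord chi (map p s).
Proof. by rewrite /chiord map_cat map_rev !filter_map. Qed.

Lemma uniq_split (y : nat) p1 q1 p2 q2 : uniq (p1 ++ y :: q1) ->
  p1 ++ y :: q1 = p2 ++ y :: q2 -> p1 = p2 /\ q1 = q2.
Proof.
move=> u e.
have := uniq_eqseq_pivotl p2 q2 u; rewrite e eqxx => /esym /andP [/eqP -> /eqP ->].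
by [].
Qed.

Section Runs2.
Variables (T : eqType) (f : nat -> T).

Lemma last_flatten (bs : seq (seq nat)) B :
  (forall B', B' \in rcons bs B -> B' != [::]) ->
  last 0 (flatten (rcons bs B)) = last 0 B.
Proof.
move=> h; rewrite -cats1 flatten_cat /= cats0 last_cat.
case: B h => [|x B] h //.
by have := h [::]; rewrite mem_rcons mem_head => /(_ isT).
Qed.

Lemma head_flatten (bs : seq (seq nat)) B :
  B != [::] -> head 0 (flatten (B :: bs)) = head 0 B.
Proof. by case: B. Qed.

Lemma block_last s B : B \in group_runs f s -> f (last 0 B) = f (head 0 B).
Proof.
move=> hB; have [hne hall] := gr_blocks hB.
apply/eqP; apply: (allP hall).
by case: B hne {hB hall} => // x B _; exact: mem_last.
Qed.

Lemma sorted_adj (T' : Type) (e : rel T') s1 x y s2 : sorted e (s1 ++ x :: y :: s2) -> e x y.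
Proof.
case: s1 => [|z s1] /=; first by case/andP.
by rewrite cat_path => /andP [_] /= /andP [_ /andP []].
Qed.

Lemma gr_seg s bs1 B bs2 : group_runs f s = bs1 ++ B :: bs2 ->
  s = flatten bs1 ++ B ++ flatten bs2 /\
  nbrQ (fun y => f y != f (head 0 B)) (flatten bs1) (flatten bs2).
Proof.
move=> e; split; first by rewrite -(gr_flatten f s) e flatten_cat.
have hmem : forall B', B' \in bs1 ++ B :: bs2 -> B' != [::].
  by move=> B'; rewrite -e => /gr_blocks [].
have hadj := gr_adj f s; rewrite e in hadj.
apply/andP; split.
- case/lastP: bs1 e hmem hadj => [|bs1 B0] // e hmem hadj; apply/orP; right.
  have hB0 : B0 \in group_runs f s by rewrite e mem_cat mem_rcons mem_head.
  rewrite last_flatten; last first.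
    by move=> B' hB'; apply: hmem; rewrite mem_cat hB'.
  rewrite (block_last hB0).
  by move: hadj; rewrite cat_rcons => hadj; have := sorted_adj hadj.
- case: bs2 e hmem hadj => [|B2 bs2] // e hmem hadj; apply/orP; right.
  rewrite head_flatten; last by apply: hmem; rewrite mem_cat !inE eqxx !orbT.
  by have /= := sorted_adj hadj; rewrite eq_sym.
Qed.
End Runs2.


Lemma filterC_comm (p q : pred nat) (s : seq nat) :
  filter p (filter q s) = filter q (filter p s).
Proof. by rewrite -!filter_predI; apply: eq_filter => x /=; rewrite andbC. Qed.

Lemma sort_map_mono (p : nat -> nat) N L :
  {in [pred n | n < N] &, {homo p : i j / i <= j}} ->
  all (fun i => i < N) L -> sort leq (map p L) = map p (sort leq L).
Proof.
move=> hp hL.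
have s1 : sorted leq (map p (sort leq L)).
  apply: (homo_sorted_in (P := [pred n | n < N]) (e := leq)) => //.
    by rewrite all_sort.
  exact: (sort_sorted leq_total L).
rewrite -(sorted_sort leq_trans s1).
apply/perm_sortP; [exact: leq_total|exact: leq_trans|exact: anti_leq|].
by apply: perm_map; rewrite perm_sym perm_sort.
Qed.

Section TwoColor.
Variables (R : fieldType) (A : lmodType R) (K : eqType) (Asub : K -> bool -> pred A).
Variables (Phi Psi : wfun A K) (G1 : pred K) (M : K).
Variables (col chi : nat -> bool).
Hypothesis hcb : is_cbifree Asub G1 (pred1 M) Phi Psi.
Hypothesis hPsiG1 : forall w, validw Asub G1 w -> Psi w = delta w.
Hypothesis hPhiM : forall w, validw Asub (pred1 M) w -> Phi w = Psi w.
Local Open Scope ring_scope.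
Local Notation elemT := (elem A K).

Lemma extF_one (F : wfun A K) : extF F [:: (1, [::])] = F [::].
Proof. exact: extF_unit. Qed.

Lemma hPsi0 : Psi [::] = 1.
Proof. by rewrite hPsiG1. Qed.

Definition allvalid (G : pred K) (x : elemT) := all (fun cw => validw Asub G cw.2) x.

Lemma inB_allvalid G s x : inB Asub G s x -> allvalid G x.
Proof.
move=> /allP h; apply/allP => cw /h /allP h2; apply/allP => l /h2.
by case/andP.
Qed.

Lemma allvalid_mulE G x y : allvalid G x -> allvalid G y -> allvalid G (mulE x y).
Proof.
move=> /allP hx /allP hy; apply/allP => cw /allpairsPdep [c1 [c2 [h1 h2 ->]]] /=.
by rewrite /validw all_cat; apply/andP; split; [apply: hx|apply: hy].
Qed.

Lemma allvalid_prodE G xs : all (allvalid G) xs -> allvalid G (prodE xs).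
Proof.
elim: xs => [|x xs IH] /=; first by [].
by case/andP => hx hxs; apply: allvalid_mulE => //; apply: IH.
Qed.

Lemma extF_eq_valid (F1 F2 : wfun A K) G x :
  (forall w, validw Asub G w -> F1 w = F2 w) -> allvalid G x -> extF F1 x = extF F2 x.
Proof.
move=> h /allP hx; rewrite /extF !big_seq; apply: eq_bigr => cw /hx hv.
by rewrite h.
Qed.

Definition goodb (P : seq nat) (bb : nat -> elemT) :=
  forall j, j \in P -> inB Asub (if col j then G1 else pred1 M) (chi j) (bb j) /\
     (col j -> exists l, bb j = [:: (1, [:: l])]).

Definition D (P U : seq nat) (bb : nat -> elemT) : R :=
  extF Phi (bprod bb P) - extF Psi (bprod bb U) * extF Phi (bprod bb [seq x <- P | x \notin U]).

Lemma D_ext P U bb1 bb2 : bb1 =1 bb2 -> D P U bb1 = D P U bb2.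
Proof. by move=> e; rewrite /D /bprod !(eq_map e). Qed.

Lemma bprod_allvalid P bb G : (forall j, j \in P -> allvalid G (bb j)) ->
  allvalid G (bprod bb P).
Proof.
move=> h; apply: allvalid_prodE; apply/allP => x /mapP [j hj ->].
by apply: h; rewrite -(mem_sort leq).
Qed.

Lemma letters_prod (L : seq nat) (bb : nat -> elemT) :
  (forall j, j \in L -> exists l, bb j = [:: (1, [:: l])]) ->
  exists w, prodE (map bb L) = [:: (1, w)] /\ size w = size L.
Proof.
elim: L => [|j L IH] h /=; first by exists [::].
have [w [ew sw]] : exists w, prodE (map bb L) = [:: (1, w)] /\ size w = size L.
  by apply: IH => i hi; apply: h; rewrite inE hi orbT.
have [l el] := h j (mem_head _ _).
by exists (l :: w); rewrite el ew /mulE /= mulr1 sw.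
Qed.

Lemma true_block_centered V (bb : nat -> elemT) : goodb V bb -> V != [::] ->
  all col V -> extF Psi (bprod bb V) = 0.
Proof.
move=> hg hV /allP hc.
have [w [ew sw]] : exists w, prodE (map bb (sort leq V)) = [:: (1, w)] /\ size w = size (sort leq V).
  apply: letters_prod => j; rewrite mem_sort => hj.
  by have [_ ] := hg j hj; apply; apply: hc.
have hv : allvalid G1 (bprod bb V).
  apply: bprod_allvalid => j hj; have [h _] := hg j hj.
  by move: h; rewrite hc //; apply: inB_allvalid.
move: hv; rewrite /bprod ew /allvalid /= andbT => hv.
rewrite /extF big_cons big_nil addr0 mul1r hPsiG1 //.
case: w ew sw hv => [|l w] //= _; rewrite size_sort.
by case: V hV {hg hc}.
Qed.


Lemma subset_chiord P : {subset chiord chi P <= P}.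
Proof. by move=> x; rewrite (perm_mem (perm_chiord chi P)). Qed.

Lemma cb_zero P U bb : sorted ltn P ->
  U \in group_runs col (chiord chi P) -> ~~ col (head 0%N U) -> goodb P bb ->
  (forall V, V \in group_runs col (chiord chi P) -> ~~ col (head 0%N V) ->
     extF Psi (bprod bb V) = 0) ->
  extF Phi (bprod bb P) = 0.
Proof.
move=> sP hU hUc hg hcent.
set N := size P; set p := nth 0%N P.
have pP : map p (iota 0 N) = P by exact: mkseq_nth.
have sPl : sorted leq P by move: sP; rewrite ltn_sorted_uniq_leq => /andP [].
have hmono : {in [pred n | (n < N)%N] &, {homo p : i j / (i <= j)%N}}.
  exact: (sorted_leq_nth leq_trans leqnn 0%N sPl).
have bpE : forall V', all (fun i => (i < N)%N) V' -> bprod (bb \o p) V' = bprod bb (map p V').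
  by move=> V' hV'; rewrite /bprod (sort_map_mono hmono hV') -map_comp.
set s' := chi_order N (chi \o p).
have hs' : map p s' = chiord chi P.
  by rewrite /s' -pP -chiord_map.
have hgr : group_runs col (chiord chi P) = map (map p) (pi_blocks N (chi \o p) (col \o p)).
  by rewrite -hs' gr_map.
have s'N : all (fun i => (i < N)%N) s'.
  apply/allP => i; rewrite /s' (_ : chi_order N (chi \o p) = chiord (chi \o p) (iota 0 N)) //.
  by rewrite (perm_mem (perm_chiord _ _)) mem_iota.
have N0 : (0 < N)%N.
  case: (posnP N) => // N0; move: hU; rewrite /chiord.
  by move: N0; rewrite /N => /size0nil ->.
have [V'U hV'U eU] : exists2 V', V' \in pi_blocks N (chi \o p) (col \o p) & U = map p V'.
  by apply/mapP; rewrite -hgr.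
have hsub : forall V', V' \in pi_blocks N (chi \o p) (col \o p) -> all (fun i => (i < N)%N) V'.
  move=> V' hV'; apply/allP => i hi; apply: (allP s'N).
  by rewrite -(gr_flatten (col \o p) s'); apply/flattenP; exists V'.
have hinP : forall V', V' \in pi_blocks N (chi \o p) (col \o p) -> {subset map p V' <= P}.
  move=> V' hV' x hx; apply: subset_chiord.
  rewrite -(gr_flatten col (chiord chi P)); apply/flattenP; exists (map p V') => //.
  by rewrite hgr map_f.
have hiota : all (fun i => (i < N)%N) (iota 0 N) by apply/allP => i; rewrite mem_iota.
rewrite -pP -bpE //.
have hinB : forall j, (j < N)%N -> inB Asub (if (col \o p) j then G1 else pred1 M) ((chi \o p) j) ((bb \o p) j).
  by move=> j hj; have [] := hg (p j) (mem_nth 0%N hj).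
have hblk : forall V', V' \in pi_blocks N (chi \o p) (col \o p) -> extF Psi (bprod (bb \o p) V') = 0.
  move=> V' hV'; rewrite bpE ?hsub //.
  have hV : map p V' \in group_runs col (chiord chi P) by rewrite hgr map_f.
  have [hne hall] := gr_blocks hV.
  case hc: (col (head 0%N (map p V'))); last by apply: hcent; rewrite // hc.
  apply: true_block_centered => //.
    by move=> j hj; apply: hg; apply: (hinP _ hV').
  by apply/allP => j hj; move: (allP hall j hj); rewrite hc => /eqP ->.
have [_ ->] := @hcb N (chi \o p) (col \o p) (bb \o p) N0 hinB hblk.
rewrite (big_rem V'U) //= bpE ?hsub // -eU.
have -> : extF Phi (bprod bb U) = extF Psi (bprod bb U).
  apply: (extF_eq_valid (G := pred1 M)); first exact: hPhiM.
  apply: bprod_allvalid => j hj.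
  have hjP : j \in P by apply: (hinP _ hV'U); rewrite -eU.
  have [hin _] := hg j hjP.
  have hcj : col j = false.
    have [_ hall] := gr_blocks hU.
    by move: (allP hall j hj) hUc => /eqP -> /negbTE.
  by move: hin; rewrite hcj; apply: inB_allvalid.
by rewrite hcent // mul0r.
Qed.

Lemma bprod_sh (F : wfun A K) bb j s V : uniq V ->
  extF F (bprod (bset bb j (shE (bb j) s)) V) =
  if j \in V then extF F (bprod bb V) + s * extF F (bprod bb (filter (predC1 j) V))
  else extF F (bprod bb V).
Proof.
move=> uV; rewrite /bprod; case: ifP => hj.
  rewrite extF_map_sh ?sort_uniq ?mem_sort //.
  by rewrite (filter_sort leq_total leq_trans).
by rewrite map_bset_notin // mem_sort hj.
Qed.

Lemma D_shift P U bb j s : uniq P -> uniq U -> j \in P ->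
  D P U (bset bb j (shE (bb j) s)) =
  D P U bb + s * D (filter (predC1 j) P) (filter (predC1 j) U) bb.
Proof.
move=> uP uU hj.
have uf : forall (q : pred nat) L, uniq L -> uniq (filter q L) by move=> q L; apply: filter_uniq.
rewrite /D !bprod_sh ?uf // hj.
case hU: (j \in U).
- rewrite mem_filter hU /=.
  have -> : [seq x <- filter (predC1 j) P | x \notin filter (predC1 j) U] = [seq x <- P | x \notin U].
    rewrite -filter_predI; apply: eq_filter => x /=; rewrite mem_filter /=.
    by case: (eqVneq x j) => [->|hne]; rewrite ?eqxx ?hU ?hne /= ?andbT.
  ring.
- rewrite mem_filter hU hj /=.
  have -> : filter (predC1 j) U = U.
    apply/all_filterP/allP => x hx /=; apply/eqP => exj; by rewrite -exj hx in hU.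
  rewrite filterC_comm; ring.
Qed.

Lemma centerA (L : seq nat) (bb : nat -> elemT) : uniq L ->
  exists t : nat -> R, extF Psi (prodE (map (fun j => shE (bb j) (t j)) L)) != 0.
Proof.
elim: L => [|j L IH] /=.
  by move=> _; exists (fun _ => 0); rewrite -/unitE extF_unit hPsi0 oner_neq0.
case/andP => hj /IH [t ht].
set c := extF Psi _ in ht.
set e := extF Psi (prodE (bb j :: map (fun j => shE (bb j) (t j)) L)).
have [s hs] : exists s, e + s * c != 0.
  case: (eqVneq e 0) => he; [exists 1 | exists 0].
    by rewrite mul1r he add0r.
  by rewrite mul0r addr0.
exists (fun i => if i == j then s else t i).
rewrite eqxx.
have -> : map (fun j0 => shE (bb j0) (if j0 == j then s else t j0)) L =
          map (fun j => shE (bb j) (t j)) L.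
  apply/eq_in_map => i hi; case: eqP => // eij; by rewrite -eij hi in hj.
have := extF_prodE_sh [::] (map (fun j => shE (bb j) (t j)) L) (bb j) s Psi.
by rewrite /= => ->.
Qed.

Lemma centerZ (L : seq nat) (bb : nat -> elemT) : uniq L -> L != [::] ->
  exists t : nat -> R, extF Psi (prodE (map (fun j => shE (bb j) (t j)) L)) = 0.
Proof.
case: L => [|j L] //= /andP [hj /(centerA bb) [t ht]] _.
set c := extF Psi _ in ht.
set e := extF Psi (prodE (bb j :: map (fun j => shE (bb j) (t j)) L)).
exists (fun i => if i == j then - e / c else t i).
rewrite eqxx.
have -> : map (fun j0 => shE (bb j0) (if j0 == j then - e / c else t j0)) L =
          map (fun j => shE (bb j) (t j)) L.
  apply/eq_in_map => i hi; case: eqP => // eij; by rewrite -eij hi in hj.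
have := extF_prodE_sh [::] (map (fun j => shE (bb j) (t j)) L) (bb j) (- e / c) Psi.
rewrite /= => ->; rewrite -/e -/c.
by rewrite divfK // addrN.
Qed.

Lemma combine_t (bs : seq (seq nat)) (Good : seq nat -> (nat -> R) -> Prop) :
  uniq (flatten bs) ->
  (forall V t1 t2, {in V, t1 =1 t2} -> Good V t1 -> Good V t2) ->
  (forall V, V \in bs -> exists t, Good V t) ->
  exists t, forall V, V \in bs -> Good V t.
Proof.
move=> + hloc; elim: bs => [|V bs IH] /=.
  by move=> _ _; exists (fun _ => 0).
rewrite cat_uniq => /and3P [uV dis ub] hex.
have [t2 ht2] : exists t, forall V', V' \in bs -> Good V' t.
  by apply: IH => // V' hV'; apply: hex; rewrite inE hV' orbT.
have [t1 ht1] := hex V (mem_head _ _).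
exists (fun i => if i \in V then t1 i else t2 i) => V'; rewrite inE => /orP [/eqP ->|hV'].
  by apply: hloc ht1 => i hi; rewrite hi.
apply: hloc (ht2 V' hV') => i hi; case: ifP => // hiV.
case/negP: dis; apply/hasP; exists i => //; by apply/flattenP; exists V'.
Qed.


Definition shL (L : seq nat) (t : nat -> R) (bb : nat -> elemT) : nat -> elemT :=
  fun j => if (j \in L) && ~~ col j then shE (bb j) (t j) else bb j.

Lemma goodb_ext P bb1 bb2 : bb1 =1 bb2 -> goodb P bb1 -> goodb P bb2.
Proof. by move=> e hg j hj; rewrite -e; apply: hg. Qed.

Lemma goodb_sh P bb j s : goodb P bb -> ~~ col j -> goodb P (bset bb j (shE (bb j) s)).
Proof.
move=> hg hcj i hi; rewrite /bset; case: eqP => [eij|_]; last by apply: hg.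
rewrite eij in hi *; have [h1 _] := hg j hi.
split; last by move=> hc; rewrite hc in hcj.
move: h1; rewrite (negbTE hcj) /inB /shE all_cat => -> /=; done.
Qed.

Lemma invariance P U bb t :
  (forall bb' j, goodb P bb' -> j \in P -> ~~ col j ->
     D (filter (predC1 j) P) (filter (predC1 j) U) bb' = 0) ->
  uniq P -> uniq U -> goodb P bb ->
  forall L, uniq L -> {subset L <= P} ->
    D P U (shL L t bb) = D P U bb /\ goodb P (shL L t bb).
Proof.
move=> Hs uP uU hg; elim=> [|j L IH] /=.
  move=> _ _; have e : shL [::] t bb =1 bb by move=> i; rewrite /shL in_nil.
  by split; [apply: D_ext | apply: goodb_ext hg] => i; rewrite e.
case/andP => hj uL hsub.
have hsub' : {subset L <= P} by move=> x hx; apply: hsub; rewrite inE hx orbT.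
have [IH1 IH2] := IH uL hsub'.
have hjP : j \in P by apply: hsub; rewrite mem_head.
case hc: (col j).
  have e : shL (j :: L) t bb =1 shL L t bb.
    move=> i; rewrite /shL inE; case: (eqVneq i j) => [->|]; by rewrite ?hc ?andbF.
  by split; [rewrite (D_ext _ _ e) | apply: goodb_ext IH2 => i; rewrite e].
have e : shL (j :: L) t bb =1 bset (shL L t bb) j (shE (shL L t bb j) (t j)).
  move=> i; rewrite /shL /bset inE; case: (eqVneq i j) => [->|hij] /=.
    by rewrite hc (negbTE hj).
  by [].
split; last by apply: goodb_ext (goodb_sh (t j) IH2 (negbT hc)) => i; rewrite e.
by rewrite (D_ext _ _ e) D_shift // Hs ?negbT // mulr0 addr0.
Qed.

Lemma uniq_flatten_mem (bs : seq (seq nat)) V : uniq (flatten bs) -> V \in bs -> uniq V.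
Proof.
move=> u hV; case/splitPr: hV u => bs1 bs2.
rewrite flatten_cat /= !cat_uniq.
by case/and3P => _ _ /and3P [].
Qed.

Lemma Tlemma N : forall P U bb s1 s2, (size P <= N)%N -> sorted ltn P ->
  chiord chi P = s1 ++ U ++ s2 -> U != [::] -> all (fun y => ~~ col y) U ->
  nbrQ col s1 s2 -> goodb P bb -> D P U bb = 0.
Proof.
elim: N => [|N IH] P U bb s1 s2 hN sP hch hU hUc hnb hg.
  move: hN; rewrite leqn0 => /nilP eP; move: hch; rewrite eP /chiord /=.
  by case: s1 hnb => //; case: U hU hUc.
have uP : uniq P := sorted_uniq ltn_trans ltnn sP.
have uch : uniq (chiord chi P) by rewrite (perm_uniq (perm_chiord chi P)).
have uU : uniq U.
  by move: uch; rewrite hch !cat_uniq => /and3P [_ _] /and3P [].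
have hUsub : {subset U <= P}.
  by move=> x hx; apply: subset_chiord; rewrite hch !mem_cat hx orbT.
have Hs : forall bb' j, goodb P bb' -> j \in P -> ~~ col j ->
     D (filter (predC1 j) P) (filter (predC1 j) U) bb' = 0.
  move=> bb' j hg' hj hcj.
  case E: (filter (predC1 j) U) => [|u U'].
    rewrite /D /bprod /= extF_one hPsi0 mul1r.
    by rewrite filter_predT subrr.
  rewrite -E; apply: (IH _ _ _ (filter (predC1 j) s1) (filter (predC1 j) s2)).
  - by rewrite -rem_filter // size_rem //; move: hN; case: (size P).
  - by apply: sorted_filter => //; exact: ltn_trans.
  - by rewrite chiord_filter hch !filter_cat.
  - by rewrite E.
  - by apply/allP => x; rewrite mem_filter => /andP [_ /(allP hUc)].
  - apply: nbr_filter hnb => x hx /=; apply/eqP => exj; by rewrite -exj hx in hcj.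
  - by move=> x; rewrite mem_filter => /andP [_ hx]; apply: hg'.
have hUgr : U \in group_runs col (chiord chi P).
  apply: (seg_in_gr (c := false) hch hU).
  - by apply/allP => x /(allP hUc); case: (col x).
  - by move: hnb => /andP [h1 _]; case: (col _) h1; rewrite ?orbT ?orbF.
  - by move: hnb => /andP [_ h2]; case: (col _) h2; rewrite ?orbT ?orbF.
set bs := group_runs col (chiord chi P).
have ubs : uniq (flatten bs) by rewrite /bs gr_flatten.
have hVsub : forall V, V \in bs -> {subset V <= P}.
  move=> V hV x hx; apply: subset_chiord; rewrite -(gr_flatten col (chiord chi P)).
  by apply/flattenP; exists V.
pose Good := fun V (t : nat -> R) => ~~ col (head 0%N V) ->
    extF Psi (prodE (map (fun j => shE (bb j) (t j)) (sort leq V))) = 0.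
have hloc : forall V t1 t2, {in V, t1 =1 t2} -> Good V t1 -> Good V t2.
  move=> V t1 t2 e; rewrite /Good => h1 h2; rewrite -h1 //.
  by congr (extF _ (prodE _)); apply/eq_in_map => j; rewrite mem_sort => /e ->.
have hex : forall V, V \in bs -> exists t, Good V t.
  move=> V hV; have [hne _] := gr_blocks hV.
  have hs : uniq (sort leq V) by rewrite sort_uniq; exact: uniq_flatten_mem ubs hV.
  have hs0 : sort leq V != [::] by rewrite -size_eq0 size_sort size_eq0.
  by have [t ht] := centerZ bb hs hs0; exists t.
have [t ht] := combine_t ubs hloc hex.
have [<- hg'] := invariance t Hs uP uU hg uP (fun x hx => hx).
set bb' := shL P t bb.
have hcent : forall V, V \in bs -> ~~ col (head 0%N V) -> extF Psi (bprod bb' V) = 0.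
  move=> V hV hc; rewrite -(ht V hV hc) /bprod; congr (extF _ (prodE _)).
  apply/eq_in_map => j; rewrite mem_sort => hj.
  have [_ hall] := gr_blocks hV.
  have hcj : col j = false by move: (allP hall j hj) hc => /eqP -> /negbTE.
  by rewrite /bb' /shL (hVsub V hV j hj) hcj.
have hUh : ~~ col (head 0%N U).
  by case: U hU hUc {hch uU hUsub Hs hUgr hcent} => // x U' _ /andP [].
by rewrite /D (cb_zero sP hUgr hUh hg' hcent) hcent // mul0r subrr.
Qed.

End TwoColor.


Section Chain.
Variables (R : fieldType) (A : lmodType R) (d : Order.disp_t) (K : orderType d).
Variables (mul : A -> A -> A) (phi : A -> R) (Asub : K -> bool -> pred A).

Lemma validw_ext (G G' : pred K) w : G =1 G' -> validw Asub G w = validw Asub G' w.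
Proof. by move=> e; apply: eq_all => l; rewrite /validl e. Qed.

Lemma chain_last (M : K) : forall ks (G : pred K) (F : wfun A K),
  bm_chain mul Asub phi G F (rcons ks M) ->
  exists (G' : pred K) (F0 F' : wfun A K),
    (forall x, G' x = G x || (x \in ks)) /\
    bm_product mul Asub G' (pred1 M) F0 (phiA mul phi) F' /\
    (forall w, validw Asub (predU G' (pred1 M)) w -> (0 < size w)%N -> F' w = phiA mul phi w).
Proof.
elim=> [|k ks IH] G F /=.
  case=> F' [hp hc]; exists G, F, F'; split => // x; by rewrite in_nil orbF.
case=> F1 [hp hc].
have [G' [F0 [F' [eG [hp' hc']]]]] := IH _ _ hc.
exists G', F0, F'; split => // x; rewrite eG /= inE; by rewrite orbA.
Qed.

Lemma get_PhiPsi (hind : bm_indep mul phi Asub) (k1 M : K) ks :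
  sorted (fun x y => (x < y)%O) (k1 :: rcons ks M) ->
  exists (G' : pred K) (Phi Psi : wfun A K),
    [/\ (forall x, G' x = (x == k1) || (x \in ks)),
        is_cbifree Asub G' (pred1 M) Phi Psi,
        (forall w, validw Asub G' w -> Psi w = delta w),
        (forall w, validw Asub (pred1 M) w -> Phi w = Psi w) &
        Phi [::] = 1%R /\
        (forall w, validw Asub (predU G' (pred1 M)) w -> (0 < size w)%N -> Phi w = phiA mul phi w)].
Proof.
move=> hs; have hc := hind k1 (rcons ks M) hs.
have [G' [F0 [F' [eG [[Phi [Psi [[_ _ h1 h2 hcb] hF]]] hc']]]]] := chain_last hc.
exists G', Phi, Psi; split => //.
- by move=> w /h1 [].
- by move=> w /h2 [-> ->].
- split; first by have [-> _] := h1 [::] isT.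
  by move=> w hw hsz; rewrite -hF // hc'.
Qed.

End Chain.

Lemma nbr_imp (Q1 Q2 : pred nat) s1 s2 : (forall x, Q1 x -> Q2 x) ->
  nbrQ Q1 s1 s2 -> nbrQ Q2 s1 s2.
Proof.
move=> h /andP [h1 h2]; apply/andP; split.
  by case/orP: h1 => [->//|/h ->]; rewrite orbT.
by case/orP: h2 => [->//|/h ->]; rewrite orbT.
Qed.

Lemma size_filter_lt (p : pred nat) s x : x \in s -> ~~ p x -> (size (filter p s) < size s)%N.
Proof.
move=> hx hpx; rewrite size_filter -(count_predC p s) -addn1 leq_add2l.
by rewrite -has_count; apply/hasP; exists x.
Qed.

Lemma adj_filter (s s1 V s2 t1 U t2 : seq nat) (Qv Qu : pred nat) :
  uniq s -> s = s1 ++ V ++ s2 -> s = t1 ++ U ++ t2 -> U != [::] ->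
  head 0%N U \notin V -> last 0%N U \notin V ->
  ~~ Qv (head 0%N U) -> ~~ Qv (last 0%N U) ->
  nbrQ Qv s1 s2 -> nbrQ Qu t1 t2 ->
  nbrQ Qu [seq x <- t1 | x \notin V] [seq x <- t2 | x \notin V].
Proof.
move=> us e1 e2 hU hh hl hQh hQl /andP [pk1 pk2] /andP [n1 n2].
case: U hU e2 hh hl hQh hQl => // u U' _ e2 hh hl hQh hQl.
apply/andP; split.
- case/lastP: t1 e2 n1 => [|t1' y] // e2 n1; apply/orP; right.
  move: n1; rewrite last_rcons => /orP [/eqP e|hy]; first by case: t1' e {e2}.
  suff hyV : y \notin V by rewrite filter_rcons hyV last_rcons.
  apply/negP => hyV; case/splitPr: hyV e1 pk1 pk2 hh => V1 V2 e1 pk1 pk2 hh.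
  have es : (s1 ++ V1) ++ y :: (V2 ++ s2) = s by rewrite e1 -!catA.
  have e : (s1 ++ V1) ++ y :: (V2 ++ s2) = t1' ++ y :: ((u :: U') ++ t2).
    by rewrite es e2 -cats1 -!catA.
  have us' : uniq ((s1 ++ V1) ++ y :: (V2 ++ s2)) by rewrite es.
  move: e => /(uniq_split us') [_ e].
  case: V2 {e1 es us'} e hh pk2 => [|v V2] /= e hh pk2.
    by move: pk2; rewrite e /= (negbTE hQh).
  by case: e => evu _; move: hh; rewrite -evu mem_cat !inE eqxx !orbT.
- case: t2 e2 n2 => [|y t2'] // e2 n2; apply/orP; right.
  move: n2 => /orP [//|hy] /=.
  suff hyV : y \notin V by rewrite hyV.
  apply/negP => hyV; case/splitPr: hyV e1 pk1 pk2 hh hl => V1 V2 e1 pk1 pk2 hh hl.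
  have es : (s1 ++ V1) ++ y :: (V2 ++ s2) = s by rewrite e1 -!catA.
  have e : (s1 ++ V1) ++ y :: (V2 ++ s2) = (t1 ++ u :: U') ++ y :: t2'.
    by rewrite es e2 -!catA.
  have us' : uniq ((s1 ++ V1) ++ y :: (V2 ++ s2)) by rewrite es.
  move/(uniq_split us'): e => [e _].
  have el := congr1 (last 0%N) e; rewrite !last_cat /= in el.
  case/lastP: V1 {e1 es us'} e el hl pk1 hh => [|V1 v] e el hl pk1 hh.
    rewrite cats0 in e; move: pk1; rewrite e last_cat /=.
    by case: (t1) => [|? ?] /=; rewrite (negbTE hQl).
  move: hl; rewrite /= -el last_rcons mem_cat mem_rcons mem_head.
  by [].
Qed.

Lemma sorted_last_lt (d : Order.disp_t) (K : orderType d) (s : seq K) (M : K) :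
  sorted (fun x y => (x < y)%O) (rcons s M) -> forall x, x \in s -> (x < M)%O.
Proof.
move=> h x hx.
have h' : sorted (fun x y => (y < x)%O) (rev (rcons s M)) by rewrite rev_sorted.
move: h'; rewrite rev_rcons /= => /(order_path_min (fun y x z (h1 : (y < x)%O) (h2 : (z < y)%O) => lt_trans h2 h1)).
by move/allP => /(_ x); rewrite mem_rev => /(_ hx).
Qed.

Section Outer.
Variables (R : fieldType) (A : lmodType R) (d : Order.disp_t) (K : orderType d).
Variables (mul : A -> A -> A) (phi : A -> R) (Asub : K -> bool -> pred A).
Variables (n : nat) (chi : nat -> bool) (om : nat -> K) (a : nat -> A).
Hypothesis ha : forall j, (j < n)%N -> Asub (om j) (chi j) (a j).
Local Open Scope ring_scope.

Definition lw (j : nat) : elem A K := [:: (1, [:: (om j, chi j, a j)])].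

Lemma phiS_Phi (Phi : wfun A K) (Gc : pred K) S :
  (forall w, validw Asub Gc w -> (0 < size w)%N -> Phi w = phiA mul phi w) ->
  Phi [::] = 1 ->
  (forall j, j \in S -> Gc (om j) && (j < n)%N) ->
  extF Phi (bprod lw S) = phiS mul phi a S.
Proof.
move=> hA h0 hS.
rewrite /bprod (_ : map lw (sort leq S) =
   map (fun l => [:: (1, [:: l])]) (map (fun j => (om j, chi j, a j)) (sort leq S))); last first.
  by rewrite -map_comp.
rewrite prodE_letters /extF big_cons big_nil addr0 mul1r /phiS.
case E: (sort leq S) => [|x s] //=.
rewrite hA //=; last first.
  rewrite /validw /=; apply/andP; split.
    have /andP [h1 h2] : Gc (om x) && (x < n)%N by apply: hS; rewrite -(mem_sort leq) E mem_head.
    by rewrite /validl /= h1 ha.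
  apply/allP => l /mapP [j hj ->].
  have /andP [h1 h2] : Gc (om j) && (j < n)%N by apply: hS; rewrite -(mem_sort leq) E inE hj orbT.
  by rewrite /validl /= h1 ha.
by rewrite -map_comp.
Qed.

Lemma T_phiS (Phi Psi : wfun A K) (G' : pred K) (M : K)
  (hcb : is_cbifree Asub G' (pred1 M) Phi Psi)
  (hPsiG1 : forall w, validw Asub G' w -> Psi w = delta w)
  (hPhiM : forall w, validw Asub (pred1 M) w -> Phi w = Psi w)
  (hPhi0 : Phi [::] = 1)
  (hPhiA : forall w, validw Asub (predU G' (pred1 M)) w -> (0 < size w)%N -> Phi w = phiA mul phi w)
  P U s1 s2 :
  (forall j, j \in P -> (j < n)%N && ((om j != M) ==> G' (om j))) ->
  sorted ltn P -> chiord chi P = s1 ++ U ++ s2 -> U != [::] ->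
  all (fun y => om y == M) U -> nbrQ (fun y => om y != M) s1 s2 ->
  phiS mul phi a P = phiS mul phi a U * phiS mul phi a [seq x <- P | x \notin U].
Proof.
move=> hP sP hch hU hUc hnb.
have hg : goodb Asub G' M (fun y => om y != M) chi P lw.
  move=> j hj; have /andP [hjn hG] := hP j hj; split.
    rewrite /inB /lw /= andbT /validl /= eqxx andbT ha // andbT.
    by rewrite andbT; case: ifP => h; [exact: (implyP hG h) | move/negbFE: h => /= ->].
  by move=> _; eexists.
have hUc' : all (fun y => ~~ (om y != M)) U by apply/allP => y /(allP hUc); rewrite negbK.
have := Tlemma hcb hPsiG1 hPhiM (leqnn (size P)) sP hch hU hUc' hnb hg.
have hUsub : {subset U <= P}.
  by move=> x hx; rewrite -(perm_mem (perm_chiord chi P)) hch !mem_cat hx orbT.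
have hval : forall S : seq nat, {subset S <= P} -> forall j, j \in S -> (predU G' (pred1 M)) (om j) && (j < n)%N.
  move=> S hS j /hS hj; have /andP [hjn hG] := hP j hj; rewrite hjn andbT /=.
  by case: (eqVneq (om j) M) => h; rewrite ?h ?eqxx ?orbT // (implyP hG h).
rewrite /D (phiS_Phi hPhiA hPhi0 (hval P (fun x hx => hx))).
rewrite (phiS_Phi hPhiA hPhi0 (hval _ _)); last by move=> x; rewrite mem_filter => /andP [].
have eU : extF Psi (bprod lw U) = extF Phi (bprod lw U).
  symmetry; apply: (extF_eq_valid (Asub := Asub) (G := pred1 M)); first exact: hPhiM.
  apply: bprod_allvalid => j hj; rewrite /allvalid /lw /= andbT /validw /= andbT /validl /=.
  by rewrite (allP hUc j hj) ha //; have /andP [] := hP j (hUsub j hj).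
rewrite eU.
rewrite (phiS_Phi hPhiA hPhi0 (hval U hUsub)).
by move/eqP; rewrite subr_eq0 => /eqP.
Qed.

Hypothesis hind : bm_indep mul phi Asub.

Lemma outer N : forall S V s1 s2 c, (size S <= N)%N -> sorted ltn S ->
  (forall j, j \in S -> (j < n)%N) ->
  chiord chi S = s1 ++ V ++ s2 -> V != [::] -> all (fun y => om y == c) V ->
  nbrQ (fun y => (om y < c)%O) s1 s2 ->
  phiS mul phi a S = phiS mul phi a V * phiS mul phi a [seq x <- S | x \notin V].
Proof.
elim: N => [|N IH] S V s1 s2 c hN sS hS hch hV hVc hpk.
  move: hN; rewrite leqn0 => /nilP eS; move: hch; rewrite eS /chiord /=.
  by case: s1 hpk => //; case: V hV hVc.
have uS : uniq S := sorted_uniq ltn_trans ltnn sS.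
have uch : uniq (chiord chi S) by rewrite (perm_uniq (perm_chiord chi S)).
have inS : forall x, x \in chiord chi S -> x \in S by move=> x; rewrite (perm_mem (perm_chiord chi S)).
have hVsub : {subset V <= S} by move=> x hx; apply: inS; rewrite hch !mem_cat hx orbT.
case E12: ((s1 == [::]) && (s2 == [::])).
  case/andP: E12 => /eqP e1 /eqP e2; rewrite e1 e2 cats0 /= in hch.
  have -> : [seq x <- S | x \notin V] = [::].
    rewrite (eq_in_filter (a2 := pred0)) ?filter_pred0 // => x hx.
    by rewrite -hch (perm_mem (perm_chiord chi S)) hx.
  rewrite {3}/phiS /= mulr1 /phiS.
  have -> : sort leq V = sort leq S.
    apply/perm_sortP; [exact: leq_total|exact: leq_trans|exact: anti_leq|].
    by rewrite -hch perm_chiord.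
  by [].
have [y hyS hy] : exists2 y, y \in S & (om y < c)%O.
  move/negbT: E12; rewrite negb_and => hne.
  case/andP: hpk => p1 p2.
  case/orP: hne => hne.
    have hl : last 0%N s1 \in s1 by case: (s1) hne => //= z s1' _; exact: mem_last.
    exists (last 0%N s1); first by apply: inS; rewrite hch mem_cat hl.
    by move: p1; rewrite (negbTE hne).
  have hl : head 0%N s2 \in s2 by case: (s2) hne => //= z s2' _; exact: mem_head.
  exists (head 0%N s2); first by apply: inS; rewrite hch !mem_cat hl !orbT.
  by move: p2; rewrite (negbTE hne).
set cs := sort <=%O (undup (map om S)).
have mcs : forall x, (x \in cs) = (x \in map om S) by move=> x; rewrite mem_sort mem_undup.
have scs : sorted <%O cs.
  by rewrite lt_sorted_uniq_le sort_uniq undup_uniq (sort_sorted le_total).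
have hV0 : head 0%N V \in V by case: (V) hV => //= z V' _; exact: mem_head.
have hcV : om (head 0%N V) = c by apply/eqP; exact: (allP hVc _ hV0).
have ycs : om y \in cs by rewrite mcs map_f.
have ccs : c \in cs by rewrite mcs -hcV map_f // hVsub.
case Ecs: cs ycs ccs scs => [|k1 ks0] // ycs ccs scs.
case/lastP: ks0 Ecs ycs ccs scs => [|ks M] Ecs ycs ccs scs.
  by move: ycs ccs hy; rewrite !inE => /eqP -> /eqP ->; rewrite ltxx.
have [G' [Phi [Psi [eG hcb hPsiG1 hPhiM [hPhi0 hPhiA]]]]] := get_PhiPsi hind scs.
have hlt : forall x, x \in k1 :: ks -> (x < M)%O.
  by apply: sorted_last_lt; rewrite rcons_cons.
have hmem : forall x, x \in cs -> (x == M) || (x \in k1 :: ks).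
  by move=> x; rewrite Ecs -rcons_cons mem_rcons inE.
have hle : forall j, j \in S -> (om j <= M)%O.
  move=> j hj; have /hmem /orP [/eqP ->//|/hlt /ltW //] : om j \in cs by rewrite mcs map_f.
have hP : forall P : seq nat, {subset P <= S} ->
    forall j, j \in P -> (j < n)%N && ((om j != M) ==> G' (om j)).
  move=> P hPS j /hPS hj; rewrite hS //=; apply/implyP => hne; rewrite eG.
  have /hmem : om j \in cs by rewrite mcs map_f.
  by rewrite (negbTE hne) /= inE.
have cM : (c <= M)%O by rewrite -hcV hle // hVsub.
case: (eqVneq c M) => [ecM | ncM].
  apply: (T_phiS hcb hPsiG1 hPhiM hPhi0 hPhiA (hP S (fun x h => h)) sS hch hV).
    by rewrite -ecM.
  by apply: nbr_imp hpk => x hx; rewrite -ecM (lt_eqF hx).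
have cltM : (c < M)%O by rewrite lt_neqAle ncM cM.
have [j0 hj0S hj0] : exists2 j0, j0 \in S & om j0 = M.
  have : M \in cs by rewrite Ecs -rcons_cons mem_rcons mem_head.
  by rewrite mcs => /mapP [j0 hj hj']; exists j0.
have : j0 \in flatten (group_runs om (chiord chi S)).
  by rewrite gr_flatten (perm_mem (perm_chiord chi S)).
case/flattenP => B hB hj0B.
have [bs1 [bs2 egr]] : exists bs1 bs2, group_runs om (chiord chi S) = bs1 ++ B :: bs2.
  by case/splitPr: hB => bs1 bs2; exists bs1, bs2.
have [hBne hBc] := gr_blocks hB.
have hBM : om (head 0%N B) = M by rewrite -hj0; symmetry; apply/eqP; exact: (allP hBc j0 hj0B).
have [echU nbU] := gr_seg egr.
rewrite hBM in nbU.
have hUc : all (fun y => om y == M) B.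
  by apply/allP => z hz; rewrite -hBM; exact: (allP hBc z hz).
have hUV : forall x, x \in B -> x \notin V.
  move=> x hx; apply/negP => hxV.
  move: (allP hUc x hx) (allP hVc x hxV) => /eqP -> /eqP eMc.
  by rewrite eMc eqxx in ncM.
have hUS : {subset B <= S} by move=> x hx; apply: inS; rewrite echU !mem_cat hx orbT.
have nMc : ~~ (M < c)%O by rewrite lt_gtF.
have e1 := T_phiS hcb hPsiG1 hPhiM hPhi0 hPhiA (hP S (fun x h => h)) sS echU hBne hUc nbU.
have e2 : phiS mul phi a [seq x <- S | x \notin B] =
    phiS mul phi a V * phiS mul phi a [seq x <- [seq x <- S | x \notin B] | x \notin V].
  apply: (IH _ _ [seq x <- s1 | x \notin B] [seq x <- s2 | x \notin B] c).
  - have := size_filter_lt (p := fun x => x \notin B) hj0S; rewrite hj0B => /(_ isT) h.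
    by rewrite -ltnS (leq_trans h hN).
  - by apply: sorted_filter => //; exact: ltn_trans.
  - by move=> j; rewrite mem_filter => /andP [_ /hS].
  - rewrite chiord_filter hch !filter_cat; congr (_ ++ _ ++ _).
    by apply/all_filterP/allP => x hx; apply/negP => /hUV; rewrite hx.
  - exact: hV.
  - exact: hVc.
  - apply: nbr_filter hpk => x hx /=; apply/negP => hxB.
    by move: (allP hUc x hxB) hx => /eqP ->; rewrite (negbTE nMc).
have e3 : phiS mul phi a [seq x <- S | x \notin V] =
    phiS mul phi a B * phiS mul phi a [seq x <- [seq x <- S | x \notin V] | x \notin B].
  apply: (T_phiS hcb hPsiG1 hPhiM hPhi0 hPhiA (hP _ _) _ _ hBne hUc).
  - by move=> j; rewrite mem_filter => /andP [].
  - by apply: sorted_filter => //; exact: ltn_trans.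
  - rewrite chiord_filter echU !filter_cat; congr (_ ++ _ ++ _).
    by apply/all_filterP/allP => x hx; rewrite hUV.
  - apply: (adj_filter (s := chiord chi S) (Qv := fun y => (om y < c)%O) uch hch echU hBne).
    + by apply: hUV; case: (B) hBne => //= z B' _; exact: mem_head.
    + by apply: hUV; case: (B) hBne => //= z B' _; exact: mem_last.
    + have hh : head 0%N B \in B by case: (B) hBne => //= z B' _; exact: mem_head.
      by rewrite /= (eqP (allP hUc _ hh)).
    + have hh : last 0%N B \in B by case: (B) hBne => //= z B' _; exact: mem_last.
      by rewrite /= (eqP (allP hUc _ hh)).
    + exact: hpk.
    + exact: nbU.
rewrite e1 e2 e3 filterC_comm.
by rewrite mulrCA.
Qed.

End Outer.

Theorem corollary2p6 (R : fieldType) (A : lmodType R) (mul : A -> A -> A)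
  (phi : A -> R) (d : Order.disp_t) (K : orderType d)
  (Asub : K -> bool -> pred A)
  (hA : nc_algebra mul) (hphi : lin_functional phi)
  (hsub : forall k s, subalgebra mul (Asub k s))
  (hind : bm_indep mul phi Asub)
  (n : nat) (hn : 0 < n) (chi : nat -> bool) (om : nat -> K) (a : nat -> A)
  (ha : forall j, j < n -> Asub (om j) (chi j) (a j))
  (k : nat) (hk : k < size (pi_blocks n chi om))
  (hpeak :
     ((k == 0) ||
      (om (head 0 (nth [::] (pi_blocks n chi om) k.-1))
         < om (head 0 (nth [::] (pi_blocks n chi om) k)))%O) &&
     ((k.+1 == size (pi_blocks n chi om)) ||
      (om (head 0 (nth [::] (pi_blocks n chi om) k.+1))
         < om (head 0 (nth [::] (pi_blocks n chi om) k)))%O)) :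
  phiS mul phi a (iota 0 n) =
    (phiS mul phi a (nth [::] (pi_blocks n chi om) k) *
     phiS mul phi a [seq j <- iota 0 n | j \notin nth [::] (pi_blocks n chi om) k])%R.
Proof.
set bs := pi_blocks n chi om in hk hpeak *.
set V := nth [::] bs k in hpeak *.
have egr : group_runs om (chiord chi (iota 0 n)) = take k bs ++ V :: drop k.+1 bs.
  by rewrite /V -(drop_nth [::] hk) cat_take_drop.
have hblk : forall B, B \in bs -> B != [::] /\ all (fun y => om y == om (head 0 B)) B.
  by move=> B; apply: gr_blocks.
have [ech _] := gr_seg egr.
have [hV hVc] := hblk V (mem_nth [::] hk).
case/andP: hpeak => p1 p2.
apply: (outer ha hind (N := n) _ _ _ ech hV hVc).
- by rewrite size_iota.
- exact: iota_ltn_sorted.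
- by move=> j; rewrite mem_iota.
apply/andP; split.
- case: (posnP k) => [k0|kpos]; first by rewrite k0 take0.
  apply/orP; right.
  have hk1 : k.-1 < size bs by apply: leq_ltn_trans hk; exact: leq_pred.
  rewrite -(prednK kpos) (take_nth [::]) // last_flatten; last first.
    move=> B; rewrite mem_rcons inE => /orP [/eqP ->|hB]; first by exact: (hblk _ (mem_nth [::] hk1)).1.
    by have [] := hblk B (mem_take hB).
  rewrite (block_last (s := chiord chi (iota 0 n))) //; last exact: mem_nth.
  by move: p1; rewrite eqn0Ngt kpos.
- case: (ltngtP k.+1 (size bs)) => hk2; first last.
  + by rewrite hk2 drop_size.
  + by move: hk2; rewrite ltnS leqNgt hk.
  apply/orP; right.
  rewrite (drop_nth [::] hk2) head_flatten; last by have [] := hblk _ (mem_nth [::] hk2).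
  by move: p2; rewrite (ltn_eqF hk2).
Qed.
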